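(* Let $G=(V,w,m)$ be a locally finite measured weighted graph (as defined in the context). Suppose that (i) $\operatorname{Deg}_{\max} := \sup_{x\in V}\sum_{y\in V} q(x,y) < \infty$, (ii) $q_{\min} := \inf_{x\sim y} q(x,y) > 0$, (iii) $\kappa(x,y)\ge 0$ for all $x\neq y\in V$. Then every bounded harmonic function $f:V\to\mathbb{R}$ (i.e. bounded $f$ with $\Delta f=0$) is constant.
   Context: A measured weighted graph $G=(V,w,m)$ consists of a countable set $V$, a symmetric function $w:V\times V\to[0,\infty)$ vanishing on the diagonal, and $m:V\to(0,\infty)$. Write $x\sim y$ iff $w(x,y)>0$. Local finiteness means $|\{y: w(x,y)>0\}|<\infty$ for every $x$. Set $q(x,y):=w(x,y)/m(x)$ and $\Delta f(x):=\sum_y q(x,y)(f(y)-f(x))$ for $f\in\mathbb{R}^V$. The combinatorial distance is $d(x,y):=\inf\{n: x=x_0\sim x_1\sim\cdots\sim x_n=y\}$. For $x\neq y$ put $\nabla_{xy}f:=\frac{f(x)-f(y)}{d(x,y)}$ and $\|\nabla f\|_\infty:=\sup_{x\sim y}\nabla_{xy}f$. The (Lin–Lu–Yau type, generalized) Ollivier curvature of $x\neq y$ is $$\kappa(x,y):=\inf\{\nabla_{xy}\Delta f:\ f\in\mathbb{R}^V,\ \nabla_{yx}f=1,\ \|\nabla f\|_\infty=1\}.$$ *)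

(* Defs.v *)
From mathcomp Require Import all_boot all_order all_algebra.
From mathcomp Require Import all_classical all_reals all_analysis.
Set Implicit Arguments. Unset Strict Implicit. Unset Printing Implicit Defensive.
Import Order.TTheory GRing.Theory Num.Theory.
Local Open Scope classical_set_scope.
Local Open Scope ring_scope.

Section Graph.
Variables (R : realType) (V : countType) (w : V -> V -> R) (m : V -> R).

Definition is_mwgraph : Prop :=
  [/\ forall x y, 0 <= w x y, forall x y, w x y = w y x,
      forall x, w x x = 0 & forall x, 0 < m x].

Definition adj (x y : V) : Prop := 0 < w x y.

Definition locally_finite : Prop := forall x, finite_set [set y | adj x y].

Definition q (x y : V) : R := w x y / m x.

(* Laplacian: finitely supported sum over V (well defined under local finiteness) *)
Definition Lap (f : V -> R) (x : V) : R := \sum_(y \in [set: V]) q x y * (f y - f x).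

Definition Deg (x : V) : R := \sum_(y \in [set: V]) q x y.

Definition path_len (x y : V) (n : nat) : Prop :=
  exists p : nat -> V, [/\ p 0%N = x, p n = y &
     forall i, (i < n)%N -> adj (p i) (p i.+1)].

Definition connected_graph : Prop := forall x y, exists n, path_len x y n.

Definition edist (x y : V) : \bar R :=
  ereal_inf [set (n%:R)%:E | n in [set n | path_len x y n]].

Definition dist (x y : V) : R := fine (edist x y).

Definition nabla (x y : V) (f : V -> R) : R := (f x - f y) / dist x y.

Definition nabla_sup (f : V -> R) : \bar R :=
  ereal_sup [set (nabla xy.1 xy.2 f)%:E | xy in [set xy : V * V | adj xy.1 xy.2]].

(* generalized Lin–Lu–Yau / Ollivier curvature *)
Definition kappa (x y : V) : \bar R :=
  ereal_inf [set (nabla x y (Lap f))%:E |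
             f in [set f : V -> R | nabla y x f = 1 /\ nabla_sup f = 1%E]].

Definition Deg_max : \bar R := ereal_sup [set (Deg x)%:E | x in [set: V]].

Definition q_min : \bar R :=
  ereal_inf [set (q xy.1 xy.2)%:E | xy in [set xy : V * V | adj xy.1 xy.2]].

End Graph.

(* Main.v *)
Require Import Defs.
From mathcomp Require Import all_boot all_order all_algebra.
From mathcomp Require Import all_classical all_reals all_analysis.
From mathcomp Require Import finmap.
Import Order.TTheory GRing.Theory Num.Theory.
From mathcomp Require Import ring lra.
Local Open Scope classical_set_scope.
Local Open Scope ring_scope.

Section Basics.
Variables (R : realType) (V : countType) (w : V -> V -> R) (m : V -> R).
Hypothesis Hg : is_mwgraph w m.
Hypothesis Hlf : locally_finite w.

Definition nb (x : V) : seq V := fset_set [set y | adj w x y].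

Lemma mem_nb x y : (y \in nb x) = (0 < w x y).
Proof.
rewrite /nb in_fset_set; last exact: Hlf.
by apply/idP/idP => [/set_mem|h]; [|apply/mem_set].
Qed.

Lemma nb_uniq x : uniq (nb x).
Proof. exact: fset_uniq. Qed.

Lemma w_ge0 x y : 0 <= w x y.
Proof. by case: Hg. Qed.

Lemma adj_sym x y : adj w x y -> adj w y x.
Proof. by case: Hg => _ Hs _ _; rewrite /adj Hs. Qed.
Arguments adj_sym [x y].

Lemma adj_neq x y : adj w x y -> x <> y.
Proof. by case: Hg => _ _ H0 _; rewrite /adj => H E; subst; rewrite H0 ltxx in H. Qed.
Arguments adj_neq [x y].

Lemma q_ge0 x y : 0 <= q w m x y.
Proof. by case: Hg => H0 _ _ Hm; rewrite /q divr_ge0 // ltW. Qed.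

Lemma q_nadj x y : ~ adj w x y -> q w m x y = 0.
Proof.
move=> H; rewrite /q.
have -> : w x y = 0.
  apply/eqP; rewrite eq_le w_ge0 andbT leNgt; apply/negP => h; exact: H.
by rewrite mul0r.
Qed.

Lemma sum_nb x (F : V -> R) : (forall y, ~ adj w x y -> F y = 0) ->
  \sum_(y \in [set: V]) F y = \sum_(y <- nb x) F y.
Proof.
move=> HF.
rewrite -(@fsbig_widen _ _ _ _ [set y | adj w x y]) //.
  by rewrite fsbig_finite //; exact: Hlf.
move=> y [_ /= Hy]; exact: HF.
Qed.

Lemma LapE f x : Lap w m f x = \sum_(y <- nb x) q w m x y * (f y - f x).
Proof. by rewrite /Lap (@sum_nb x) // => y /q_nadj ->; rewrite mul0r. Qed.

Lemma DegE x : Deg w m x = \sum_(y <- nb x) q w m x y.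
Proof. by rewrite /Deg (@sum_nb x) // => y /q_nadj ->. Qed.

Lemma sum_ler x (A B : V -> R) : (forall v, adj w x v -> A v <= B v) ->
  \sum_(v <- nb x) A v <= \sum_(v <- nb x) B v.
Proof.
move=> H; rewrite big_seq [leRHS]big_seq; apply: ler_sum => v.
by rewrite mem_nb => /H.
Qed.
Arguments sum_ler [x A B].

Lemma sum_ge_term x (A : V -> R) v0 : (forall v, adj w x v -> 0 <= A v) ->
  adj w x v0 -> A v0 <= \sum_(v <- nb x) A v.
Proof.
move=> H h0; rewrite (bigD1_seq v0) ?nb_uniq ?mem_nb //=.
rewrite lerDl big_seq_cond; apply: sumr_ge0 => v /andP[].
by rewrite mem_nb => /H.
Qed.

Lemma Deg_ge0 x : 0 <= Deg w m x.
Proof. by rewrite DegE; apply: sumr_ge0 => v _; exact: q_ge0. Qed.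

Lemma Deg_ge_q x y : adj w x y -> q w m x y <= Deg w m x.
Proof. by move=> h; rewrite DegE; apply: sum_ge_term => // v _; exact: q_ge0. Qed.
Arguments Deg_ge_q [x y].


Lemma dist_adj x y : adj w x y -> Defs.dist w x y = 1.
Proof.
move=> h; suff H : Defs.edist w x y = 1%:E by rewrite /Defs.dist H.
rewrite /Defs.edist.
apply/eqP; rewrite eq_le; apply/andP; split.
  apply: ereal_inf_lbound; exists 1%N => //.
  exists (fun i => if i == 0%N then x else y); split => //.
  by move=> i; rewrite ltnS leqn0 => /eqP ->.
apply: le_ereal_inf_tmp => _ [n [p [p0 pn _]] <-].
rewrite lee_fin ler1n lt0n; apply/negP => /eqP n0.
have E : x = y by rewrite -p0 -pn n0.
exact: adj_neq h E.
Qed.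

Lemma nabla_adj x y f : adj w x y -> nabla w x y f = f x - f y.
Proof. by move=> h; rewrite /nabla dist_adj // divr1. Qed.

Definition lip1 (g : V -> R) := forall a b, adj w a b -> g a - g b <= 1.

Lemma nabla_sup1 g x y : lip1 g -> adj w x y -> g y - g x = 1 -> nabla_sup w g = 1%E.
Proof.
move=> Hl h e; apply/eqP; rewrite eq_le; apply/andP; split.
  apply: ge_ereal_sup => _ [[a b] /= hab <-].
  by rewrite nabla_adj // lee_fin Hl.
apply: ereal_sup_ubound; exists (y, x) => /=; first exact: adj_sym.
by rewrite nabla_adj ?e //; exact: adj_sym.
Qed.

Hypothesis Hk : forall x y : V, x <> y -> (0 <= kappa w m x y)%E.

Lemma curv g x y : lip1 g -> adj w x y -> g y - g x = 1 ->
  Lap w m g y <= Lap w m g x.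
Proof.
move=> Hl h e.
have := Hk x y (@adj_neq x y h).
have : (kappa w m x y <= (nabla w x y (Lap w m g))%:E)%E.
  apply: ereal_inf_lbound; exists g => //; split.
    by rewrite nabla_adj //; exact: adj_sym.
  exact: (@nabla_sup1 g x y Hl h e).
move=> H1 H2; have := le_trans H2 H1.
by rewrite lee_fin nabla_adj // subr_ge0.
Qed.


Variables (Q K : R) (F : V -> R).
Hypothesis HQ0 : 0 < Q.
Hypothesis HK0 : 0 < K.
Hypothesis HQ : forall a b, adj w a b -> Q <= q w m a b.
Hypothesis HK : forall x, Deg w m x <= K.
Hypothesis HF : lip1 F.
Hypothesis Hh : forall z, Lap w m F z = 0.

Lemma step x y eps : adj w x y -> 0 < eps -> eps <= Q / (4 * K) ->
  1 - eps <= F y - F x ->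
  exists a b, adj w b a /\ F y + Q / (4 * K) < F a /\
              1 - (3 * K / Q) * eps <= F a - F b.
Proof.
move=> hxy he0 hes hd.
set s := Q / (4 * K); set C := 3 * K / Q.
have hyx := adj_sym hxy.
have hes2 : eps <= s := hes.
have QK : Q <= K := le_trans (HQ _ _ hyx) (le_trans (Deg_ge_q hyx) (HK y)).
have s0 : 0 < s by rewrite divr_gt0 // mulr_gt0.
have s14 : s <= 1/4.
  by rewrite /s ler_pdivrMr ?mulr_gt0 //; lra.
have K0 : K != 0 by rewrite gt_eqF.
have Q0 : Q != 0 by rewrite gt_eqF.
have sK : s * K = Q / 4 by rewrite /s; field.
have hFyx : F y - F x <= 1 := HF _ _ hyx.
have qyx0 : 0 <= q w m y x := q_ge0 y x.
have QC : Q * C = 3 * K by rewrite /C; field.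
have C0 : 0 <= C * eps by rewrite mulr_ge0 // ?ltW // divr_gt0 // mulr_gt0.
have [v [hyv hv]] : exists v, adj w y v /\ F y + s < F v.
  case: (pselect (exists v, adj w y v /\ F y + s < F v)) => // Hn; exfalso.
  have Hle : forall v, adj w y v -> q w m y v * (F v - F y) <=
      s * q w m y v - (if v == x then (1 - eps + s) * q w m y x else 0).
    move=> v hv; have qv0 := q_ge0 y v.
    case: eqP => [->|nvx]; first by nra.
    have : F v <= F y + s.
      by rewrite leNgt; apply/negP => h; apply: Hn; exists v.
    by rewrite subr0; nra.
  have := sum_ler Hle; rewrite -LapE Hh big_split /= sumrN -mulr_sumr -DegE.
  have : (1 - eps + s) * q w m y x <=
      \sum_(v <- nb y) (if v == x then (1 - eps + s) * q w m y x else 0).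
    have := @sum_ge_term y (fun v => if v == x then (1 - eps + s) * q w m y x else 0) x.
    rewrite eqxx; apply => // v _; case: eqP => // _; apply: mulr_ge0 => //; lra.
  have := HK y; have := HQ _ _ hyx; have := Deg_ge0 y.
  nra.
case: (pselect (exists a b, adj w b a /\ F y + s < F a /\
              1 - C * eps <= F a - F b)) => // Hn; exfalso.
have H : forall a b, adj w b a -> F y + s < F a -> F a - F b < 1 - C * eps.
  move=> a b hba ha; rewrite ltNge; apply/negP => hc; apply: Hn.
  by exists a, b.
pose g0 := fun z => F z + (if F y + s < F z then C * eps else 0).
pose rho := fun z : V => if z == x then 0 else if 0 < w x z then 1 else 2 : R.
pose g := fun z => Num.min (g0 z) (F y - 1 + rho z).
have Hg0 : lip1 g0.
  move=> a b hab; rewrite /g0; have := HF _ _ hab.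
  case: ifP => ha; case: ifP => hb; try lra.
  by have := H a b (adj_sym hab) ha; lra.
have Hrho : lip1 rho.
  move=> a b hab; rewrite /rho.
  case: eqP => [_|nax]; first by case: eqP => _; [|case: ifP]; lra.
  case: ifP => hxa; first by case: eqP => _; [|case: ifP]; lra.
  case: eqP => [E|_]; last by case: ifP; lra.
  by subst b; have := adj_sym hab; rewrite /adj hxa.
have Hgl : lip1 g.
  move=> a b hab; rewrite /g /=; have := Hg0 _ _ hab; have := Hrho _ _ hab.
  have [hb|hb] := leP (g0 b) (F y - 1 + rho b).
    move=> _ h1.
    have : Num.min (g0 a) (F y - 1 + rho a) <= g0 a by rewrite ge_min lexx.
    lra.
  move=> h1 _.
  have : Num.min (g0 a) (F y - 1 + rho a) <= F y - 1 + rho a by rewrite ge_min lexx orbT.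
  lra.
have nyx : (y == x) = false by apply/eqP => E; exact: (@adj_neq x y hxy (esym E)).
have g0y : g0 y = F y.
  rewrite /g0; have -> : (F y + s < F y) = false by apply/negbTE; rewrite -leNgt; lra.
  by rewrite addr0.
have g0x : g0 x = F x.
  rewrite /g0; have -> : (F y + s < F x) = false by apply/negbTE; rewrite -leNgt; lra.
  by rewrite addr0.
have gy : g y = F y.
  by rewrite /g g0y /rho nyx hxy subrK minxx.
have gx : g x = F y - 1.
  by rewrite /g g0x /rho eqxx addr0 min_r //; lra.
have gyx : g y - g x = 1 by rewrite gy gx; lra.
have hc := @curv g x y Hgl hxy gyx.
set d := 1 - (F y - F x).
have d0 : 0 <= d by rewrite /d; lra.
have de : d <= eps by rewrite /d; lra.
have Ux : Lap w m g x <= d * Deg w m x.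
  rewrite LapE.
  have : \sum_(u <- nb x) q w m x u * (g u - g x) <=
         \sum_(u <- nb x) (q w m x u * (F u - F x) + d * q w m x u).
    apply: sum_ler => u hxu; have qu0 := q_ge0 x u.
    have : g u <= g0 u by rewrite /g ge_min lexx.
    have : g0 u = F u.
      rewrite /g0; have hux := HF _ _ (adj_sym hxu).
      have -> : (F y + s < F u) = false by apply/negbTE; rewrite -leNgt; lra.
      by rewrite addr0.
    rewrite gx /d => -> h1; nra.
  by rewrite big_split /= -mulr_sumr -(LapE F x) -DegE Hh add0r.
have Ly : 3 * K * eps - d * Deg w m y <= Lap w m g y.
  rewrite LapE.
  have : \sum_(u <- nb y) (q w m y u * (F u - F y) +
           (q w m y u * (if F y + s < F u then C * eps else 0) - d * q w m y u))
         <= \sum_(u <- nb y) q w m y u * (g u - g y).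
    apply: sum_ler => u hyu; have qu0 := q_ge0 y u.
    suff hgu : F u - F y + (if F y + s < F u then C * eps else 0) - d <= g u - g y.
      have := ler_wpM2l qu0 hgu; rewrite !mulrDr ?mulrN; lra.
    have : g0 u - d <= g u.
      rewrite /g le_min; apply/andP; split; first lra.
      rewrite /rho; case: eqP => [->|nux]; first by rewrite g0x /d; lra.
      case: ifP => hxu.
        by have := Hg0 _ _ (adj_sym hxu); rewrite g0x /d; lra.
      by have := Hg0 _ _ (adj_sym hyu); rewrite g0y; lra.
    rewrite gy /g0; lra.
  rewrite big_split /= -(LapE F y) Hh add0r big_split /= sumrN -mulr_sumr -DegE.
  have : Q * (C * eps) <= \sum_(i <- nb y) q w m y i * (if F y + s < F i then C * eps else 0).
    have := @sum_ge_term y (fun i => q w m y i * (if F y + s < F i then C * eps else 0)) v.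
    rewrite hv; move=> h; apply: le_trans (h _ hyv).
      by apply: ler_wpM2r => //; exact: HQ.
    by move=> u _; apply: mulr_ge0; [exact: q_ge0|case: ifP].
  rewrite mulrA QC; lra.
have e1 : d * Deg w m x <= eps * K by apply: ler_pM => //; exact: Deg_ge0.
have e2 : d * Deg w m y <= eps * K by apply: ler_pM => //; exact: Deg_ge0.
have : 0 < K * eps by rewrite mulr_gt0.
lra.
Qed.


Lemma iter_step n x0 y0 : adj w x0 y0 ->
  1 - Q / (4 * K) / (3 * K / Q) ^+ n <= F y0 - F x0 ->
  forall k, (k <= n)%N -> exists a b, adj w b a /\
    F y0 + k%:R * (Q / (4 * K)) <= F a /\
    1 - Q / (4 * K) / (3 * K / Q) ^+ (n - k) <= F a - F b.
Proof.
move=> h0 hd0.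
set s := Q / (4 * K); set C := 3 * K / Q.
have QK : Q <= K := le_trans (HQ _ _ h0) (le_trans (Deg_ge_q h0) (HK x0)).
have K0 : K != 0 by rewrite gt_eqF.
have Q0 : Q != 0 by rewrite gt_eqF.
have s0 : 0 < s by rewrite divr_gt0 // mulr_gt0.
have C1 : 1 <= C.
  rewrite /C ler_pdivlMr // mul1r. have := QK; have := HK0; lra.
have C0 : C != 0 by apply/eqP => E; rewrite E in C1; lra.
elim => [|k IH] hk.
  by exists y0, x0; rewrite mul0r addr0 subn0.
have [a [b [hba [ha hd]]]] := IH (ltnW hk).
set e := s / C ^+ (n - k).
have Cn1 : 1 <= C ^+ (n - k) by exact: exprn_ege1.
have e0 : 0 < e by rewrite divr_gt0 // (lt_le_trans ltr01 Cn1).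
have es : e <= s.
  by rewrite /e ler_pdivrMr ?(lt_le_trans ltr01 Cn1) // ler_peMr // ltW.
have [a' [b' [hba' [ha' hd']]]] := @step b a e hba e0 es hd.
rewrite -/s in ha'; rewrite -/C in hd'.
exists a', b'; split => //; split.
  rewrite -natr1 mulrDl mul1r; lra.
have -> : s / C ^+ (n - k.+1) = 3 * K / Q * e.
  rewrite /e -(subnSK hk) exprS /C; field.
  by rewrite Q0 K0 -/C expf_neq0.
exact: hd'.
Qed.

End Basics.

Theorem theorem2p1 (R : realType) (V : countType) (w : V -> V -> R) (m : V -> R) :
  is_mwgraph w m ->
  connected_graph w ->
  locally_finite w ->
  (Deg_max w m < +oo)%E ->
  (0 < q_min w m)%E ->
  (forall x y : V, x <> y -> (0 <= kappa w m x y)%E) ->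
  forall f : V -> R,
    (exists M : R, forall x, `|f x| <= M) ->
    (forall x, Lap w m f x = 0) ->
    forall x y, f x = f y.
Proof.
move=> Hg Hconn Hlf HD Hq Hk f [M HM] Hh x y.
case: (eqVneq (f x) (f y)) => // Hne; exfalso.
have [K [K0 HK]] : exists K, 0 < K /\ forall z, Deg w m z <= K.
  move: HD; case E: (Deg_max w m) => [r| |] // _.
    exists (Num.max r 1); split; first by rewrite lt_max ltr01 orbT.
    move=> z; have : ((Deg w m z)%:E <= Deg_max w m)%E.
      by apply: ereal_sup_ubound; exists z.
    by rewrite E lee_fin => h; rewrite le_max h.
  exists 1; split => // z; have : ((Deg w m z)%:E <= Deg_max w m)%E.
    by apply: ereal_sup_ubound; exists z.
  by rewrite E leeNy_eq.
have [Q [Q0 HQ]] : exists Q, 0 < Q /\ forall a b, adj w a b -> Q <= q w m a b.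
  move: Hq; case E: (q_min w m) => [r| |] //.
    rewrite lte_fin => r0; exists r; split => // a b hab.
    have : (q_min w m <= (q w m a b)%:E)%E by apply: ereal_inf_lbound; exists (a, b).
    by rewrite E lee_fin.
  move=> _; exists 1; split => // a b hab.
  have : (q_min w m <= (q w m a b)%:E)%E by apply: ereal_inf_lbound; exists (a, b).
  by rewrite E leye_eq.
have [a0 [b0 [hab0 hne0]]] : exists a b, adj w a b /\ f a != f b.
  case: (Hconn x y) => n [p [p0 pn hp]].
  case: (pselect (exists a b, adj w a b /\ f a != f b)) => // Hn.
  have Hc : forall i, (i <= n)%N -> f (p i) = f x.
    elim => [|i IH] hi; first by rewrite p0.
    rewrite -(IH (ltnW hi)); apply/eqP; apply/negPn/negP => hneq; apply: Hn.
    by exists (p i), (p i.+1); split; [exact: hp | rewrite eq_sym].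
  by have := Hc n (leqnn n); rewrite pn => E; rewrite E eqxx in Hne.
have [a1 [b1 [h1 hpos]]] : exists a b, adj w a b /\ 0 < f a - f b.
  have [h|h] := ltP (f b0) (f a0).
    by exists a0, b0; rewrite subr_gt0.
  exists b0, a0; split; first exact: (@adj_sym _ _ _ _ Hg _ _ hab0).
  by rewrite subr_gt0 lt_neqAle h andbT.
have M0 : 0 <= M := le_trans (normr_ge0 _) (HM x).
pose E := [set d | exists a b, adj w a b /\ d = f a - f b].
have hsE : has_sup E.
  split; first by exists (f a1 - f b1), a1, b1.
  exists (2 * M) => _ [a [b [_ ->]]].
  by move: (HM a) (HM b); rewrite !ler_norml => /andP[? ?] /andP[? ?]; lra.
set L := sup E.
have L0 : 0 < L.
  apply: lt_le_trans hpos _; apply: sup_upper_bound => //; by exists a1, b1.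
pose F := fun z => f z / L.
have HF : lip1 R V w F.
  move=> a b hab; rewrite /F -mulrBl ler_pdivrMr // mul1r.
  by apply: sup_upper_bound => //; exists a, b.
have HhF : forall z, Lap w m F z = 0.
  move=> z; rewrite (@LapE _ _ _ _ Hg Hlf).
  have -> : \sum_(y0 <- nb R V w z) q w m z y0 * (F y0 - F z) =
            (\sum_(y0 <- nb R V w z) q w m z y0 * (f y0 - f z)) / L.
    by rewrite mulr_suml; apply: eq_bigr => i _; rewrite /F -mulrBl mulrA.
  by rewrite -(@LapE _ _ _ _ Hg Hlf) Hh mul0r.
set B := M / L.
have HB : forall z, - B <= F z <= B.
  move=> z.
  have iL : 0 < L^-1 by rewrite invr_gt0.
  rewrite -ler_norml /F normrM (gtr0_norm iL).
  by rewrite ler_wpM2r // invr_ge0 ltW.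
set s := Q / (4 * K); set C := 3 * K / Q.
have s0 : 0 < s by rewrite divr_gt0 // mulr_gt0.
have C0 : 0 < C by rewrite divr_gt0 // mulr_gt0.
have [n hn] : exists n : nat, 2 * B / s < n%:R.
  exists (Num.Def.archi_bound (2 * B / s)); apply: archi_boundP.
  apply: divr_ge0; last exact: ltW.
  by apply: mulr_ge0 => //; rewrite /B divr_ge0 // ltW.
set eps0 := s / C ^+ n.
have e0 : 0 < eps0 by rewrite divr_gt0 // exprn_gt0.
have [d Ed hd] := sup_adherent (mulr_gt0 e0 L0) hsE.
case: Ed => a [b [hab ->]] in hd.
rewrite -/L in hd.
have hd0 : 1 - eps0 <= F a - F b.
  rewrite /F -mulrBl ler_pdivlMr // mulrBl mul1r; lra.
have [a' [b' [_ [ha' _]]]] :=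
  @iter_step _ _ _ _ Hg Hlf Hk _ _ _ Q0 K0 HQ HK HF HhF _ _ _
     (@adj_sym _ _ _ _ Hg _ _ hab) hd0 _ (leqnn n).
move: hn; rewrite ltr_pdivrMr // => hn.
move: (HB a) (HB a') => /andP[? ?] /andP[? ?].
rewrite -/s in ha'; clear HD Hq Hk; lra.
Qed.
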